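(* Let $j\in\{1,\ldots,d\}$ and let $A,B\subseteq\mathbb{R}^d$ be compactly $j$-generated cones with $(A\cap B)\setminus\{0\}\neq\emptyset$. Then $A\cap B$ is compactly $j$-generated and $\sigma_j(A\cap B)=\sigma_j(A)\cap\sigma_j(B)$.
   Context: For $A\subseteq\mathbb{R}^d$ and $j\in\{1,\ldots,d\}$, $\sigma_j(A)=\{x=(x^1,\ldots,x^d)\in A: x^j=1\}$. A cone $A\subseteq\mathbb{R}^d$ is compactly $j$-generated if $\sigma_j(A)$ is compact and non-empty and $A=\{\lambda x:\lambda\ge0,\ x\in\sigma_j(A)\}$. *)

(* Defs.v *)
From mathcomp Require Import all_boot all_order all_algebra.
From mathcomp Require Import all_classical all_reals all_analysis.
Set Implicit Arguments. Unset Strict Implicit. Unset Printing Implicit Defensive.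
Import Order.TTheory GRing.Theory Num.Theory.
Import numFieldNormedType.Exports.
Local Open Scope ring_scope.
Local Open Scope classical_set_scope.

Definition sigma_j (R : realType) (d : nat) (j : 'I_d) (A : set 'rV[R]_d)
  : set 'rV[R]_d := [set x | A x /\ x ord0 j = 1].

Definition compactly_generated (R : realType) (d : nat) (j : 'I_d)
  (A : set 'rV[R]_d) : Prop :=
  compact (sigma_j j A) /\ sigma_j j A !=set0 /\
  A = [set y | exists2 l : R, 0 <= l & exists2 x, sigma_j j A x & y = l *: x].

(* Main.v *)
Require Import Defs.
From mathcomp Require Import all_boot all_order all_algebra.
From mathcomp Require Import all_classical all_reals all_analysis.
Import Order.TTheory GRing.Theory Num.Theory.
Import numFieldNormedType.Exports.
Local Open Scope ring_scope.
Local Open Scope classical_set_scope.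

Lemma cg_mem (R : realType) (d : nat) (j : 'I_d) (A : set 'rV[R]_d) y :
  compactly_generated j A -> A y ->
  exists2 x, sigma_j j A x & y = (y ord0 j) *: x.
Proof.
move=> [_ [_ hA]] Ay; rewrite hA in Ay.
case: Ay => l l0 [x [Ax x1] ->]; exists x => //.
by rewrite mxE x1 mulr1.
Qed.

Lemma cg_in (R : realType) (d : nat) (j : 'I_d) (A : set 'rV[R]_d) l x :
  compactly_generated j A -> 0 <= l -> sigma_j j A x -> A (l *: x).
Proof.
move=> [_ [_ hA]] l0 sx; rewrite hA; exists l => //; by exists x.
Qed.

Theorem lemmaA1 (R : realType) (d : nat) (j : 'I_d) (A B : set 'rV[R]_d) :
  compactly_generated j A -> compactly_generated j B ->
  (A `&` B) `\ 0 !=set0 ->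
  compactly_generated j (A `&` B) /\
  sigma_j j (A `&` B) = sigma_j j A `&` sigma_j j B.
Proof.
move=> cA cB [y [[Ay By] y0]].
have Hs : sigma_j j (A `&` B) = sigma_j j A `&` sigma_j j B.
  by apply/seteqP; split => x /=; rewrite /sigma_j /=; tauto.
have key : forall z, A z -> B z -> z ord0 j != 0 ->
    sigma_j j (A `&` B) ((z ord0 j)^-1 *: z).
  move=> z Az Bz zj.
  have [x [Ax x1] ex] := cg_mem _ _ _ _ _ cA Az.
  have [x' [Bx x1'] ex'] := cg_mem _ _ _ _ _ cB Bz.
  have xx' : x = x' by apply: (scalerI zj); rewrite -ex -ex'.
  subst x'; have -> : (z ord0 j)^-1 *: z = x.
    by rewrite [X in _ *: X]ex scalerA mulVf // scale1r.
  by split.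
have yj : y ord0 j != 0.
  apply/negP => /eqP yj; apply: y0; have [x _ ex] := cg_mem _ _ _ _ _ cA Ay.
  by rewrite /= ex yj scale0r.
split=> //; split; last split.
- rewrite Hs; apply: compact_closedI; first by case: cA.
  apply: compact_closed; [exact: norm_hausdorff | by case: cB].
- by exists ((y ord0 j)^-1 *: y); apply: key.
- apply/seteqP; split => z /=.
  + move=> [Az Bz]; have [zj|zj] := eqVneq (z ord0 j) 0.
      exists 0 => //; exists ((y ord0 j)^-1 *: y); first by apply: key.
      have [x _ ex] := cg_mem _ _ _ _ _ cA Az; by rewrite scale0r ex zj scale0r.
    exists (z ord0 j).
      have [x [_ x1] ex] := cg_mem _ _ _ _ _ cA Az.
      have [l l0 [w [_ w1] ew]] : exists2 l : R, 0 <= l & exists2 w, sigma_j j A w & z = l *: w.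
        by case: cA => _ [_ hA]; move: Az; rewrite {1}hA.
      by rewrite ew mxE w1 mulr1.
    exists ((z ord0 j)^-1 *: z); first exact: key.
    by rewrite scalerA divff // scale1r.
  + move=> [l l0 [x [[Ax Bx] x1] ->]]; split.
      by apply: (cg_in _ _ _ _ _ _ cA l0); split.
    by apply: (cg_in _ _ _ _ _ _ cB l0); split.
Qed.
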